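(* Let $\Phi,\Psi$ be join doctrines with $\omega\in\Phi$ and $\Phi$ sound dual to $\Psi^{\mathrm{op}}$, and let $A$ be a $\mathbb{U}$-$\Psi^{\mathrm{op}}$-inflattice. Then $f\mapsto f^{-1}(1)$ is an order-isomorphism from $\mathbb{U}\Psi^{\mathrm{op}}\mathbf{Inf}(A,\mathbb{I})$ (ordered pointwise) onto the set of $\mathbb{U}$-invariant $\rho^{\mathrm{op}}$-closed $\Psi^{\mathrm{op}}$-filters in $A$ (ordered by inclusion), with inverse $\phi\mapsto 1-\rho(\phi,-)$, where $\rho(\phi,a):=\bigwedge_{b\in\phi}\rho(b,a)$.
   Context: Join doctrine: class of posets containing the one-element poset, closed under unions $\bigcup\mathcal{S}$ of sets $\mathcal{S}$ of subposets in the class with $\mathcal{S}$ (by inclusion) in the class, under codomains of monotone maps with cofinal image, and under cofinal subposets. $\omega$ = naturals. $\Phi$ sound dual to $\Psi^{\mathrm{op}}$: for all posets $X,Y$, lower sets $\phi\subseteq Y$ in $\Phi$, lower sets $\psi\subseteq X$ in $\Psi$ and monotone $F:X^{\mathrm{op}}\times Y\to2$, $\bigwedge_{x\in\psi}\bigvee_{y\in\phi}F=\bigvee_{y\in\phi}\bigwedge_{x\in\psi}F$; and for every poset $X$ the lattice of lower sets of $X$ is the closure of the lower sets in $\Psi$ under unions of subfamilies belonging (ordered by inclusion) to $\Phi$. A $\Psi^{\mathrm{op}}$-meet is a meet of a subset $S$ with $S^{\mathrm{op}}\in\Psi$; a $\Psi^{\mathrm{op}}$-filter in $A$ is an upper subset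 closed under $\Psi^{\mathrm{op}}$-meets of its subsets. $\mathbb{I}=[0,1]$, $\mathbb{U}$ = monoid of surjective monotone maps $\mathbb{I}\to\mathbb{I}$. A $\mathbb{U}$-$\Psi^{\mathrm{op}}$-inflattice is a poset with a $\mathbb{U}$-action monotone in both variables, having all $\Psi^{\mathrm{op}}$-meets, each $u$ preserving them. $\mathbb{U}\Psi^{\mathrm{op}}\mathbf{Inf}(A,\mathbb{I})$ = $\mathbb{U}$-equivariant monotone $\Psi^{\mathrm{op}}$-meet-preserving maps $A\to\mathbb{I}$ ($\mathbb{I}$ with evaluation action). With $\dotplus$ truncated addition: $a\le_r b$ iff $u(a)\le v(b)$ for all $u,v\in\mathbb{U}$ with $u(t\dotplus r)\le v(t)$ for all $t$; $\rho(a,b)=\bigwedge\{r\mid a\le_r b\}$. A subset $B\subseteq A$ is a $\rho^{\mathrm{op}}$-closed upper set if every $a$ with $\bigwedge_{b\in B}\rho(b,a)=0$ lies in $B$. $B$ is $\mathbb{U}$-invariant if $u(B)\subseteq B$ for all $u\in\mathbb{U}$. *)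

(* Defs.v *)
From mathcomp Require Import all_boot all_order all_algebra.
From mathcomp Require Import boolp classical_sets reals Rstruct.
Set Implicit Arguments. Unset Strict Implicit. Unset Printing Implicit Defensive.
Import Order.TTheory GRing.Theory Num.Theory.
Local Open Scope classical_set_scope.
Local Open Scope ring_scope.

Record poset := Poset {
  car :> Type;
  ple : car -> car -> Prop;
  ple_refl : forall x, ple x x;
  ple_trans : forall x y z, ple x y -> ple y z -> ple x z;
  ple_anti : forall x y, ple x y -> ple y x -> x = y }.

Definition sub_poset (X : poset) (S : set X) : poset.
Proof.
refine (@Poset {x : X | S x} (fun a b => ple (proj1_sig a) (proj1_sig b)) _ _ _).
- by move=> [x ?]; apply: ple_refl.
- by move=> [x ?] [y ?] [z ?] /=; apply: ple_trans.
- move=> [x px] [y py] /= h1 h2; have e := ple_anti h1 h2; subst y.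
  by rewrite (Prop_irrelevance px py).
Defined.

Definition op_poset (X : poset) : poset.
Proof.
refine (@Poset X (fun a b => ple b a) _ _ _).
- by move=> x; apply: ple_refl.
- by move=> x y z h1 h2; apply: ple_trans h2 h1.
- by move=> x y h1 h2; apply: ple_anti.
Defined.

Definition family_poset (X : Type) (F : set (set X)) : poset.
Proof.
refine (@Poset {S : set X | F S} (fun a b => proj1_sig a `<=` proj1_sig b) _ _ _).
- by move=> [S ?].
- by move=> [S ?] [T ?] [U ?] /= h1 h2 x /h1 /h2.
- move=> [S pS] [T pT] /= h1 h2.
  have e : S = T by apply/seteqP; split.
  subst T; by rewrite (Prop_irrelevance pS pT).
Defined.

Definition one_poset : poset.
Proof. by refine (@Poset unit (fun _ _ => True) _ _ _) => // [[]] []. Defined.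

Definition omega_poset : poset.
Proof.
refine (@Poset nat (fun m n => (m <= n)%N) _ _ _).
- exact: leqnn.
- by move=> x y z h1 h2; apply: leq_trans h1 h2.
- by move=> x y h1 h2; apply/eqP; rewrite eqn_leq h1 h2.
Defined.

Definition monotone (X Y : poset) (f : X -> Y) :=
  forall x y, ple x y -> ple (f x) (f y).

Definition cofinal_image (X Y : poset) (f : X -> Y) :=
  forall y : Y, exists x : X, ple y (f x).

Definition cofinal_subset (X : poset) (S : set X) :=
  forall x : X, exists2 s, S s & ple x s.

Definition lower_set (X : poset) (L : set X) :=
  forall x y, ple x y -> L y -> L x.

Definition upper_set (X : poset) (L : set X) :=
  forall x y, ple x y -> L x -> L y.

Definition doctrine := poset -> Prop.

Definition join_doctrine (D : doctrine) : Prop :=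
  [/\ D one_poset,
      (forall (X : poset) (F : set (set X)),
          (forall S, F S -> D (sub_poset S)) -> D (family_poset F) ->
          D (sub_poset (\bigcup_(S in F) S))),
      (forall (X Y : poset) (f : X -> Y),
          monotone f -> cofinal_image f -> D X -> D Y) &
      (forall (X : poset) (S : set X), D X -> cofinal_subset S -> D (sub_poset S))].

(* closure of the Psi-lower sets of X under unions of Phi-subfamilies *)
Definition in_union_closure (Phi Psi : doctrine) (X : poset) (L : set X) : Prop :=
  forall C : set (set X),
    (forall psi, lower_set psi -> Psi (sub_poset psi) -> C psi) ->
    (forall F : set (set X), F `<=` C -> Phi (family_poset F) ->
        C (\bigcup_(S in F) S)) ->
    C L.

Definition sound_dual (Phi Psi : doctrine) : Prop :=
  (forall (X Y : poset) (phi : set Y) (psi : set X) (F : X -> Y -> Prop),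
      lower_set phi -> Phi (sub_poset phi) ->
      lower_set psi -> Psi (sub_poset psi) ->
      (* F : X^op x Y -> 2 monotone *)
      (forall x x' y y', ple x' x -> ple y y' -> F x y -> F x' y') ->
      ((forall x, psi x -> exists2 y, phi y & F x y) <->
       (exists2 y, phi y & forall x, psi x -> F x y)))
  /\
  (forall (X : poset) (L : set X), lower_set L -> in_union_closure Phi Psi L).

Definition is_glb (X : poset) (S : set X) (m : X) :=
  (forall s, S s -> ple m s) /\ (forall l, (forall s, S s -> ple l s) -> ple l m).

Definition psiop_subset (Psi : doctrine) (X : poset) (S : set X) :=
  Psi (op_poset (sub_poset S)).

Definition inI (r : Rdefinitions.R) : bool := (0 <= r) && (r <= 1).
Definition I := {r : Rdefinitions.R | inI r}.
Definition ival (t : I) : Rdefinitions.R := proj1_sig t.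

Lemma I0_proof : inI 0.
Proof. rewrite /inI; by apply/andP; split; [exact: lexx | exact: ler01]. Qed.
Lemma I1_proof : inI 1.
Proof. rewrite /inI; by apply/andP; split; [exact: ler01 | exact: lexx]. Qed.
Definition I0 : I := exist inI 0 I0_proof.
Definition I1 : I := exist inI 1 I1_proof.

Definition Ile (s t : I) := ival s <= ival t.

Definition inU (u : I -> I) :=
  (forall s t, Ile s t -> Ile (u s) (u t)) /\ (forall t, exists s, u s = t).

Lemma tplus_proof (t r : I) : inI (Num.min (ival t + ival r) 1).
Proof.
rewrite /inI.
case: t r => [t /andP[t0 t1]] [r /andP[r0 r1]] /=; rewrite /ival /=.
rewrite ge_min lexx orbT andbT le_min ler01 andbT.
exact: addr_ge0.
Qed.
Definition tplus (t r : I) : I := exist inI _ (tplus_proof t r).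

(* meets in I (the empty meet is 1) *)
Lemma infI_proof (S : set I) : inI (inf ((ival @` S) `|` [set 1])).
Proof.
rewrite /inI.
apply/andP; split.
- apply: lb_le_inf; first by exists 1; right.
  move=> x [[t _ <-]|->]; last exact: ler01.
  by case: t => t p; rewrite /ival /=; case/andP: p.
- apply: ge_inf; last by right.
  exists 0 => x [[t _ <-]|->]; last exact: ler01.
  by case: t => t p; rewrite /ival /=; case/andP: p.
Qed.
Definition infI (S : set I) : I := exist inI _ (infI_proof S).

Lemma compI_proof (t : I) : inI (1 - ival t).
Proof.
rewrite /inI.
case: t => t /andP[t0 t1] /=; rewrite /ival /= subr_ge0 t1 /=.
by rewrite lerBlDr lerDl.
Qed.
Definition compI (t : I) : I := exist inI _ (compI_proof t).

Definition U_inflattice (Psi : doctrine) (A : poset) (act : (I -> I) -> A -> A) :=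
  [/\
      (forall a, act id a = a),
      (forall u v a, inU u -> inU v -> act (u \o v) a = act u (act v a)),
      (forall u v a b, inU u -> inU v -> (forall t, Ile (u t) (v t)) -> ple a b ->
          ple (act u a) (act v b)),
      (forall S : set A, psiop_subset Psi S -> exists m, is_glb S m) &
      (forall u (S : set A) m, inU u -> psiop_subset Psi S -> is_glb S m ->
          is_glb (act u @` S) (act u m))].

Definition UInf_map (Psi : doctrine) (A : poset) (act : (I -> I) -> A -> A)
    (f : A -> I) :=
  [/\ (forall a b, ple a b -> Ile (f a) (f b)),
      (forall u a, inU u -> f (act u a) = u (f a)) &
      (forall (S : set A) m, psiop_subset Psi S -> is_glb S m ->
          f m = infI (f @` S))].

Definition le_r (A : poset) (act : (I -> I) -> A -> A) (r : I) (a b : A) :=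
  forall u v, inU u -> inU v -> (forall t, Ile (u (tplus t r)) (v t)) ->
    ple (act u a) (act v b).

Definition rho (A : poset) (act : (I -> I) -> A -> A) (a b : A) : I :=
  infI [set r | le_r act r a b].

Definition rho_set (A : poset) (act : (I -> I) -> A -> A) (B : set A) (a : A) : I :=
  infI [set rho act b a | b in B].

Definition rhoop_closed (A : poset) (act : (I -> I) -> A -> A) (B : set A) :=
  forall a, rho_set act B a = I0 -> B a.

Definition U_invariant (A : poset) (act : (I -> I) -> A -> A) (B : set A) :=
  forall u b, inU u -> B b -> B (act u b).

Definition psiop_filter (Psi : doctrine) (A : poset) (B : set A) :=
  upper_set B /\
  (forall (S : set A) m, S `<=` B -> psiop_subset Psi S -> is_glb S m -> B m).

Definition UFilt (Psi : doctrine) (A : poset) (act : (I -> I) -> A -> A) (B : set A) :=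
  [/\ U_invariant act B, rhoop_closed act B & psiop_filter Psi B].

(* Main.v *)
Require Import Defs.
From mathcomp Require Import all_boot all_order all_algebra.
From mathcomp Require Import boolp classical_sets reals Rstruct.
From mathcomp Require Import lra.
Import Order.TTheory GRing.Theory Num.Theory.
Local Open Scope classical_set_scope.
Local Open Scope ring_scope.

Set Implicit Arguments. Unset Strict Implicit.
Local Notation RR := Rdefinitions.R.

Lemma ival_ge0 (t : I) : 0 <= ival t.
Proof. by case: t => x p /=; case/andP: (p). Qed.
Lemma ival_le1 (t : I) : ival t <= 1.
Proof. by case: t => x p /=; case/andP: (p). Qed.
Lemma ival_inj (s t : I) : ival s = ival t -> s = t.
Proof. by move=> h; apply: val_inj. Qed.

Definition clamp (x : RR) : RR := if x < 0 then 0 else if 1 < x then 1 else x.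

Lemma clamp_proof x : inI (clamp x).
Proof.
rewrite /inI /clamp; case: ltP => h1; first by rewrite lexx ler01.
case: ltP => h2; first by rewrite ler01 lexx.
by apply/andP; split.
Qed.

Definition mkI (x : RR) : I := exist inI (clamp x) (clamp_proof x).
Lemma mkIE x : ival (mkI x) = clamp x. Proof. by []. Qed.

Lemma clampE x : 0 <= x -> x <= 1 -> clamp x = x.
Proof. rewrite /clamp => h1 h2; case: ltP => h3; first lra. case: ltP => h4; lra. Qed.
Lemma clamp_le x y : x <= y -> clamp x <= clamp y.
Proof. rewrite /clamp => h; case: (ltP x 0) => ? /=; case: (ltP 1 x) => ? /=; case: (ltP y 0) => ? /=; case: (ltP 1 y) => ? /=; lra. Qed.
Lemma clamp_ge0 x : 0 <= clamp x.
Proof. by case/andP: (clamp_proof x). Qed.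
Lemma clamp_le1 x : clamp x <= 1.
Proof. by case/andP: (clamp_proof x). Qed.
Lemma clamp_le_id x : 0 <= x -> clamp x <= x.
Proof. rewrite /clamp => h; case: (ltP x 0) => ? /=; case: (ltP 1 x) => ? /=; lra. Qed.
Lemma clamp_ge x y : y <= x -> y <= 1 -> y <= clamp x.
Proof. rewrite /clamp => h h'; case: (ltP x 0) => ? /=; case: (ltP 1 x) => ? /=; lra. Qed.
Lemma clamp_le0 x : x <= 0 -> clamp x = 0.
Proof. rewrite /clamp => h; case: (ltP x 0) => ? /=; case: (ltP 1 x) => ? /=; lra. Qed.
Lemma clamp_eq1 x : clamp x = 1 -> 1 <= x.
Proof. rewrite /clamp; case: (ltP x 0) => ? /=; case: (ltP 1 x) => ? /=; lra. Qed.
Lemma mkI_ival (t : I) : mkI (ival t) = t.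
Proof. apply: ival_inj; rewrite mkIE clampE //; [exact: ival_ge0|exact: ival_le1]. Qed.

Lemma tplus_le t r : ival (tplus t r) <= ival t + ival r.
Proof. by rewrite /tplus /ival /= ge_min lexx. Qed.
Lemma le_tplus x t r : x <= ival t + ival r -> x <= 1 -> x <= ival (tplus t r).
Proof. by move=> h1 h2; rewrite /tplus /ival /= le_min h1 h2. Qed.

Lemma Uid : inU id.
Proof. by split => // t; exists t. Qed.
Lemma Ucomp u v : inU u -> inU v -> inU (u \o v).
Proof.
move=> [hu1 hu2] [hv1 hv2]; split.
  by move=> s t h /=; apply: hu1; apply: hv1.
move=> t; have [s hs] := hu2 t; have [s' hs'] := hv2 s.
by exists s'; rewrite /= hs' hs.
Qed.
Lemma U1 u : inU u -> u I1 = I1.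
Proof.
move=> [hu1 hu2]; have [s hs] := hu2 I1.
have := hu1 s I1 (ival_le1 s); rewrite hs /Ile => h.
apply: ival_inj; apply/eqP; rewrite eq_le h ival_le1 //.
Qed.
Lemma U0 u : inU u -> u I0 = I0.
Proof.
move=> [hu1 hu2]; have [s hs] := hu2 I0.
have := hu1 I0 s (ival_ge0 s); rewrite hs /Ile => h.
apply: ival_inj; apply/eqP; rewrite eq_le h ival_ge0 //.
Qed.

Lemma infI_le (S : set I) s : S s -> ival (infI S) <= ival s.
Proof.
move=> hs; rewrite /infI /ival /=; apply: ge_inf; last by left; exists s.
exists 0 => x [[t _ <-]|->]; [exact: ival_ge0|exact: ler01].
Qed.
Lemma infI_le1 (S : set I) : ival (infI S) <= 1.
Proof.
rewrite /infI /ival /=; apply: ge_inf; last by right.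
exists 0 => x [[t _ <-]|->]; [exact: ival_ge0|exact: ler01].
Qed.
Lemma infI_ge (S : set I) x : (forall s, S s -> x <= ival s) -> x <= 1 ->
  x <= ival (infI S).
Proof.
move=> h h1; rewrite /infI /ival /=; apply: lb_le_inf; first by exists 1; right.
move=> y [[t ht <-]|->] //; exact: h.
Qed.
Lemma infI_lt (S : set I) x : ival (infI S) < x -> x <= 1 ->
  exists2 s, S s & ival s < x.
Proof.
move=> h h1; apply: contrapT => hn.
have : x <= ival (infI S).
  apply: infI_ge => // s hs; rewrite leNgt; apply/negP => hl; apply: hn; by exists s.
by rewrite leNgt h.
Qed.

Lemma compIE t : ival (compI t) = 1 - ival t. Proof. by []. Qed.

Definition wc (c : RR) (t : I) : I := mkI (ival t / c).
Definition sh (r : RR) (t : I) : I := mkI ((ival t - r) / (1 - r)).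

Lemma div_mono (x y c : RR) : 0 < c -> x <= y -> x / c <= y / c.
Proof. by move=> hc h; rewrite ler_pM2r ?invr_gt0. Qed.

Lemma wc_U c : 0 < c -> c <= 1 -> inU (wc c).
Proof.
move=> h0 h1; split.
  by move=> s t h; rewrite /Ile /wc !mkIE; apply: clamp_le; apply: div_mono.
move=> t; exists (mkI (ival t * c)); apply: ival_inj.
have ht0 := ival_ge0 t; have ht1 := ival_le1 t.
rewrite /wc !mkIE (@clampE (ival t * c)); last 2 first.
- by apply: mulr_ge0 => //; apply: ltW.
- by apply: mulr_ile1 => //; apply: ltW.
by rewrite mulfK ?gt_eqF // clampE.
Qed.

Lemma sh_U r : 0 <= r -> r < 1 -> inU (sh r).
Proof.
move=> h0 h1; have h1r : 0 < 1 - r by lra.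
split.
  move=> s t h; rewrite /Ile /sh !mkIE; apply: clamp_le; apply: div_mono => //.
  rewrite /Ile in h; lra.
move=> t; exists (mkI (r + ival t * (1 - r))); apply: ival_inj.
have ht0 := ival_ge0 t; have ht1 := ival_le1 t.
have hp0 : 0 <= ival t * (1 - r) by apply: mulr_ge0 => //; lra.
have hp1 : ival t * (1 - r) <= 1 - r by rewrite ler_piMl //; lra.
rewrite /sh !mkIE (@clampE (r + _)); [|lra|lra].
by rewrite addrAC subrr add0r mulfK ?gt_eqF // clampE.
Qed.

Lemma le_r_mono (A : poset) (act : (I -> I) -> A -> A) (r r' : I) a b :
  ival r <= ival r' -> le_r act r a b -> le_r act r' a b.
Proof.
move=> hr h u v hu hv huv; apply: h => // t.
apply: (le_trans _ (huv t)); apply: hu.1.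
rewrite /Ile; apply: le_tplus; last exact: ival_le1.
by apply: (le_trans (tplus_le _ _)); rewrite lerD2l.
Qed.

Lemma KG (Psi : doctrine) (A : poset) (act : (I -> I) -> A -> A) p q r a :
  U_inflattice Psi act -> inU p -> inU q ->
  (forall t, ival (p t) <= ival (q t) + ival r) ->
  le_r act r (act p a) (act q a).
Proof.
move=> [Hid Hcomp Hmono _ _] hp hq h u v hu hv huv.
rewrite -!Hcomp //; apply: Hmono; try exact: Ucomp; last exact: ple_refl.
move=> t /=; apply: le_trans (huv (q t)); apply: hu.1.
by rewrite /Ile; apply: le_tplus => //; exact: ival_le1.
Qed.

Lemma rho_le (A : poset) (act : (I -> I) -> A -> A) r a b :
  le_r act r a b -> ival (rho act a b) <= ival r.
Proof. by move=> h; apply: infI_le. Qed.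

Lemma rho_set_le (A : poset) (act : (I -> I) -> A -> A) (B : set A) b a :
  B b -> ival (rho_set act B a) <= ival (rho act b a).
Proof. by move=> h; apply: infI_le; exists b. Qed.

Lemma K1 (Psi : doctrine) (A : poset) (act : (I -> I) -> A -> A) (B : set A) b a r :
  U_inflattice Psi act -> upper_set B -> U_invariant act B ->
  B b -> le_r act r b a -> ival r < 1 -> B (act (wc (1 - ival r)) a).
Proof.
move=> HA Hup Hinv hb h hr.
have hr0 := ival_ge0 r.
have hsh := sh_U hr0 hr.
have hwc : inU (wc (1 - ival r)) by apply: wc_U; lra.
apply: (Hup (act (sh (ival r)) b)); last exact: Hinv.
apply: h => // t; rewrite /Ile /sh /wc !mkIE; apply: clamp_le.
apply: div_mono; first lra.
by have := tplus_le t r; lra.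
Qed.

Lemma Ldir1 (Psi : doctrine) (A : poset) (act : (I -> I) -> A -> A) (B : set A) a c :
  U_inflattice Psi act -> 0 < c -> c <= 1 -> B (act (wc c) a) ->
  ival (rho_set act B a) <= 1 - c.
Proof.
move=> HA h0 h1 hb.
apply: (le_trans (rho_set_le act a hb)).
have -> : 1 - c = ival (mkI (1 - c)) by rewrite mkIE clampE //; lra.
apply: rho_le.
have HA' := HA; case: HA' => Hid _ _ _ _.
rewrite -{2}(Hid a); apply: (KG a HA); [exact: wc_U h0 h1|exact: Uid|].
move=> t; rewrite /wc !mkIE (@clampE (1 - c)); [|lra|lra].
have ht0 := ival_ge0 t; have ht1 := ival_le1 t.
case: (leP c (ival t)) => hct.
  by apply: (le_trans (clamp_le1 _)); lra.
apply: (le_trans (clamp_le_id _)); first by apply: divr_ge0 => //; lra.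
rewrite ler_pdivrMr //; nra.
Qed.

Lemma Ldir2 (Psi : doctrine) (A : poset) (act : (I -> I) -> A -> A) (B : set A) a c :
  U_inflattice Psi act -> upper_set B -> U_invariant act B -> rhoop_closed act B ->
  0 < c -> c <= 1 -> ival (rho_set act B a) <= 1 - c -> B (act (wc c) a).
Proof.
move=> HA Hup Hinv Hcl h0 h1 hD.
apply: Hcl; apply: ival_inj; rewrite [ival I0]/=.
set D := ival _.
suff hD' : forall e, 0 < e -> e < 1 -> D <= e.
  have hD0 : 0 <= D by apply: ival_ge0.
  have hD1 : D <= 1 by apply: ival_le1.
  apply/eqP; rewrite eq_le hD0 andbT.
  case: (leP D 0) => // hDp.
  have := hD' (D / 2); lra.
move=> e he0 he1.
have hc'0 : 0 < c * (1 - e) by apply: mulr_gt0; lra.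
have hc'c : c * (1 - e) < c by nra.
have hc'1 : c * (1 - e) <= 1 by nra.
have hlt : ival (rho_set act B a) < 1 - c * (1 - e) by lra.
have [s [b hb <-] hs] := infI_lt hlt (ltac:(lra)).
have [r hr hr'] := infI_lt hs (ltac:(lra)).
have er' : ival (mkI (1 - c * (1 - e))) = 1 - c * (1 - e).
  by rewrite mkIE clampE; lra.
have hr2 : le_r act (mkI (1 - c * (1 - e))) b a.
  by apply: (le_r_mono _ hr); rewrite er'; lra.
have := K1 HA Hup Hinv hb hr2 (ltac:(rewrite er'; lra)).
rewrite er' (_ : 1 - (1 - c * (1 - e)) = c * (1 - e)); last by lra.
move=> hB'.
apply: le_trans (rho_set_le act (act (wc c) a) hB') _.
have ee : ival (mkI e) = e by rewrite mkIE clampE; lra.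
rewrite -{2}ee; apply: rho_le.
apply: (KG a HA); [exact: wc_U hc'0 hc'1|exact: wc_U h0 h1|].
move=> t; rewrite ee /wc !mkIE.
have ht0 := ival_ge0 t; have ht1 := ival_le1 t.
case: (leP (c * (1 - e)) (ival t)) => ht.
  have : 1 - e <= clamp (ival t / c).
    by apply: clamp_ge; [rewrite ler_pdivlMr //; nra | lra].
  by have := clamp_le1 (ival t / (c * (1 - e))); lra.
have hx : ival t / c < 1 - e by rewrite ltr_pdivrMr //; nra.
have hx0 : 0 <= ival t / c by apply: divr_ge0 => //; lra.
rewrite (@clampE (ival t / c)); [|lra|lra].
apply: (le_trans (clamp_le_id _)); first by apply: divr_ge0 => //; lra.
rewrite invfM mulrA ler_pdivrMr; last lra.
nra.
Qed.

Lemma psiop_img (Psi : doctrine) (A : poset) (act : (I -> I) -> A -> A) w (S : set A) :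
  join_doctrine Psi -> U_inflattice Psi act -> inU w -> psiop_subset Psi S ->
  psiop_subset Psi (act w @` S).
Proof.
move=> [_ _ Hcod _] [_ _ Hmono _ _] hw hS.
rewrite /psiop_subset in hS *.
pose f (x : op_poset (sub_poset S)) : op_poset (sub_poset (act w @` S)) :=
  exist _ (act w (proj1_sig x)) (ex_intro2 _ _ (proj1_sig x) (proj2_sig x) erefl).
apply: (Hcod _ _ f) => //.
  move=> [x hx] [y hy] /= hxy; apply: Hmono => // t; exact: lexx.
move=> [y [x hx exy]]; exists (exist _ x hx) => /=; rewrite -exy; exact: ple_refl.
Qed.

Lemma Bf_upper (Psi : doctrine) (A : poset) (act : (I -> I) -> A -> A) f :
  UInf_map Psi act f -> upper_set (f @^-1` [set I1]).
Proof.
move=> [Hm _ _] x y hxy; rewrite /preimage /= => hx.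
apply: ival_inj; have := Hm _ _ hxy; rewrite /Ile hx => h.
by apply/eqP; rewrite eq_le ival_le1 h.
Qed.

Lemma Bf_inv (Psi : doctrine) (A : poset) (act : (I -> I) -> A -> A) f :
  UInf_map Psi act f -> U_invariant act (f @^-1` [set I1]).
Proof.
move=> [_ He _] u b hu; rewrite /preimage /= => hb.
by rewrite He // hb U1.
Qed.

Lemma F1 (Psi : doctrine) (A : poset) (act : (I -> I) -> A -> A) f a :
  U_inflattice Psi act -> UInf_map Psi act f ->
  1 - ival (f a) <= ival (rho_set act (f @^-1` [set I1]) a).
Proof.
move=> HA Hf; have Hf' := Hf; case: Hf' => _ He _.
have hfa0 := ival_ge0 (f a); have hfa1 := ival_le1 (f a).
apply: infI_ge; last by lra.
move=> s [b hb <-]; apply: infI_ge; last by lra.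
move=> r hr; case: (leP 1 (ival r)) => hr1; first by lra.
have hr0 := ival_ge0 r.
have := K1 HA (Bf_upper Hf) (Bf_inv Hf) hb hr hr1.
rewrite /preimage /= He; last by apply: wc_U; lra.
move=> /(congr1 ival); rewrite /wc mkIE [ival I1]/= => /clamp_eq1.
rewrite ler_pdivlMr; last by lra.
lra.
Qed.

Lemma part1 (Psi : doctrine) (A : poset) (act : (I -> I) -> A -> A) f :
  U_inflattice Psi act -> UInf_map Psi act f -> UFilt Psi act (f @^-1` [set I1]).
Proof.
move=> HA Hf; have Hf' := Hf; case: Hf' => Hm He Hmeet.
rewrite /UFilt /psiop_filter; split; first exact: Bf_inv Hf.
  move=> a hD; rewrite /preimage /=.
  have := F1 a HA Hf; rewrite hD [ival I0]/= => h.
  apply: ival_inj; apply/eqP; rewrite eq_le ival_le1 /=; lra.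
split; first exact: Bf_upper Hf.
move=> S m hS hpsi hglb; rewrite /preimage /= (Hmeet S m hpsi hglb).
apply: ival_inj; apply/eqP; rewrite eq_le infI_le1 /=.
apply: infI_ge => // s [x hx <-].
by have := hS x hx; rewrite /preimage /= => ->.
Qed.

Lemma part3 (Psi : doctrine) (A : poset) (act : (I -> I) -> A -> A) f :
  U_inflattice Psi act -> UInf_map Psi act f ->
  (fun a => compI (rho_set act (f @^-1` [set I1]) a)) = f.
Proof.
move=> HA Hf; have Hf' := Hf; case: Hf' => Hm He Hmeet.
apply: funext => a; apply: ival_inj; rewrite !compIE.
have := F1 a HA Hf => h1.
have h2 := infI_le1 [set rho act b a | b in f @^-1` [set I1]].
have hD1 : ival (rho_set act (f @^-1` [set I1]) a) <= 1 by exact: h2.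
apply/eqP; rewrite eq_le; apply/andP; split; first by lra.
case: (leP (ival (f a)) 0) => hf0; first by lra.
have hf1 := ival_le1 (f a).
suff : ival (rho_set act (f @^-1` [set I1]) a) <= 1 - ival (f a) by lra.
apply: (Ldir1 HA hf0 hf1).
rewrite /preimage /= He; last exact: wc_U hf0 hf1.
apply: ival_inj; rewrite /wc mkIE mulfV ?gt_eqF // clampE //; lra.
Qed.

Lemma gmono (Psi : doctrine) (A : poset) (act : (I -> I) -> A -> A) (B : set A) a a' :
  U_inflattice Psi act -> UFilt Psi act B -> ple a a' ->
  ival (rho_set act B a') <= ival (rho_set act B a).
Proof.
move=> HA [Hinv Hcl [Hup Hflt]] haa.
have HA' := HA; case: HA' => Hid Hcomp Hmono _ _.
have hD1 := ival_le1 (rho_set act B a'); have hD0 := ival_ge0 (rho_set act B a).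
have hDa1 := ival_le1 (rho_set act B a).
case: (leP (1 - ival (rho_set act B a)) 0) => hc; first by lra.
have hc1 : 1 - ival (rho_set act B a) <= 1 by lra.
have hB := Ldir2 HA Hup Hinv Hcl hc hc1 (ltac:(lra)).
have hB' : B (act (wc (1 - ival (rho_set act B a))) a').
  apply: Hup hB; apply: Hmono => //; first exact: wc_U hc hc1; first exact: wc_U hc hc1.
  by move=> t; exact: lexx.
have := Ldir1 HA hc hc1 hB'; lra.
Qed.

Lemma gequiv (Psi : doctrine) (A : poset) (act : (I -> I) -> A -> A) (B : set A) u a :
  U_inflattice Psi act -> UFilt Psi act B -> inU u ->
  ival (rho_set act B (act u a)) = 1 - ival (u (compI (rho_set act B a))).
Proof.
move=> HA [Hinv Hcl [Hup Hflt]] hu.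
have HA' := HA; case: HA' => Hid Hcomp Hmono _ _.
set g0 := compI (rho_set act B a).
have eg0 : ival g0 = 1 - ival (rho_set act B a) by [].
have hDu0 := ival_ge0 (rho_set act B (act u a)).
have hDu1 := ival_le1 (rho_set act B (act u a)).
have hg00 := ival_ge0 g0; have hg01 := ival_le1 g0.
have hug0 := ival_ge0 (u g0); have hug1 := ival_le1 (u g0).
apply/eqP; rewrite eq_le; apply/andP; split.
-
  case: (leP (ival (u g0)) 0) => hc; first by lra.
  have hc1 := hug1.
  set c := ival (u g0) in hc hc1 *.
  set d := ival g0.
  have hd : 0 < d.
    rewrite /d; case: (leP (ival g0) 0) => // hd0.
    have eg : g0 = I0 by apply: ival_inj; rewrite [ival I0]/=; lra.
    by move: hc; rewrite /c eg U0 // [ival I0]/= ltxx.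
  have hd1 : d <= 1 by exact: ival_le1.
  have hB1 : B (act (wc d) a) by apply: (Ldir2 HA Hup Hinv Hcl hd hd1); rewrite /d eg0; lra.
  pose h := fun y : I => mkI (ival (u (mkI (d * ival y))) / c).
  have hh : inU h.
    split.
      move=> s t hst; rewrite /Ile /h !mkIE; apply: clamp_le; apply: div_mono => //.
      apply: hu.1; rewrite /Ile !mkIE; apply: clamp_le; by rewrite ler_pM2l.
    move=> z; have [x hx] := hu.2 (mkI (c * ival z)).
    have hz0 := ival_ge0 z; have hz1 := ival_le1 z.
    have ecz : ival (u x) = c * ival z.
      rewrite hx mkIE clampE //; [exact: mulr_ge0 | exact: mulr_ile1].
    have hx0 := ival_ge0 x.
    case: (leP (ival x) d) => hxd.
      exists (mkI (ival x / d)); apply: ival_inj; rewrite /h !mkIE.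
      rewrite (@clampE (ival x / d)); last 2 first.
      + exact: divr_ge0.
      + by rewrite ler_pdivrMr // mul1r.
      rewrite [d * _]mulrC divfK ?gt_eqF // mkI_ival ecz [c * _]mulrC mulfK ?gt_eqF //.
      by rewrite clampE.
    exists I1; apply: ival_inj.
    have : c <= ival (u x) by apply: hu.1; rewrite /Ile -/d; lra.
    rewrite ecz => hcz.
    have hz : ival z = 1 by have : 1 <= ival z; [rewrite -(ler_pM2l hc) mulr1 | lra].
    rewrite hz /h mkIE [ival I1]/= mulr1 /d mkI_ival -/c mulfV ?gt_eqF //.
    by rewrite clampE //; lra.
  have hwd := wc_U hd hd1; have hwc := wc_U hc hc1.
  have hcmp : forall t, Ile ((h \o wc d) t) ((wc c \o u) t).
    move=> t; rewrite /Ile /= /wc /h ?mkIE.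
    have ht0 := ival_ge0 t.
    case: (leP d (ival t)) => htd.
      have : c <= ival (u t) by apply: hu.1.
      move=> hcu; apply: (le_trans (clamp_le1 _)); apply: clamp_ge => //.
      by rewrite ler_pdivlMr // mul1r.
    rewrite (@clampE (ival t / d)); last 2 first.
    + exact: divr_ge0 => //; lra.
    + by rewrite ler_pdivrMr // mul1r; lra.
    by rewrite [d * _]mulrC divfK ?gt_eqF // mkI_ival.
  have hB2 : B (act (wc c \o u) a).
    apply: (Hup (act (h \o wc d) a)).
      by apply: Hmono => //; [exact: Ucomp | exact: Ucomp | exact: ple_refl].
    by rewrite Hcomp //; apply: Hinv.
  rewrite Hcomp // in hB2.
  have := Ldir1 HA hc hc1 hB2; lra.
-
  case: (leP (1 - ival (rho_set act B (act u a))) 0) => hc; first by lra.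
  have hc1 : 1 - ival (rho_set act B (act u a)) <= 1 by lra.
  set c := 1 - ival (rho_set act B (act u a)) in hc hc1 *.
  have hB2 : B (act (wc c) (act u a)) by apply: (Ldir2 HA Hup Hinv Hcl hc hc1); rewrite /c; lra.
  have hwc := wc_U hc hc1.
  rewrite -Hcomp // in hB2.
  have claim : forall x0 : I, ival (u x0) < c -> ival x0 <= ival g0.
    move=> x0 hx0.
    have hux0 := ival_ge0 (u x0).
    have he0 : 0 <= ival (u x0) / c by apply: divr_ge0 => //; lra.
    have he1 : ival (u x0) / c < 1 by rewrite ltr_pdivrMr // mul1r.
    have hsh := sh_U he0 he1.
    have hb : B (act (sh (ival (u x0) / c) \o (wc c \o u)) a).
      by rewrite Hcomp //; [apply: Hinv | exact: Ucomp].
    have hx01 := ival_le1 x0; have hx00 := ival_ge0 x0.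
    have er : ival (mkI (1 - ival x0)) = 1 - ival x0 by rewrite mkIE clampE //; lra.
    have hle : le_r act (mkI (1 - ival x0)) (act (sh (ival (u x0) / c) \o (wc c \o u)) a) a.
      rewrite -{2}(Hid a); apply: (KG a HA); [exact: (Ucomp hsh (Ucomp hwc hu)) | exact: Uid |].
      move=> t; rewrite er.
      have ht0 := ival_ge0 t; have ht1 := ival_le1 t.
      case: (leP (ival x0) (ival t)) => hxt.
        by have := ival_le1 ((sh (ival (u x0) / c) \o (wc c \o u)) t); lra.
      have hut : ival (u t) <= ival (u x0) by apply: hu.1; rewrite /Ile; lra.
      have hut0 := ival_ge0 (u t).
      rewrite /= /sh /wc ?mkIE clamp_le0; first by lra.
      rewrite ler_pdivrMr ?mul0r; last by lra.
      have := @clamp_le_id (ival (u t) / c) (ltac:(apply: divr_ge0 => //; lra)).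
      have : ival (u t) / c <= ival (u x0) / c by apply: div_mono.
      lra.
    have := le_trans (rho_set_le act a hb) (rho_le hle).
    rewrite er eg0; lra.
  case: (leP c (ival (u g0))) => hlt; first by rewrite /c in hlt; lra.
  have ez : ival (mkI ((ival (u g0) + c) / 2)) = (ival (u g0) + c) / 2.
    by rewrite mkIE clampE //; lra.
  have [x1 hx1] := hu.2 (mkI ((ival (u g0) + c) / 2)).
  have : ival (u x1) < c by rewrite hx1 ez; lra.
  move=> /claim hx1g.
  have := hu.1 _ _ hx1g; rewrite /Ile hx1 ez; lra.
Qed.

Lemma part2 (Psi : doctrine) (A : poset) (act : (I -> I) -> A -> A) (B : set A) :
  join_doctrine Psi -> U_inflattice Psi act -> UFilt Psi act B ->
  UInf_map Psi act (fun a => compI (rho_set act B a)).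
Proof.
move=> HJ HA HB; have HB' := HB; case: HB' => Hinv Hcl [Hup Hflt].
have HA' := HA; case: HA' => Hid Hcomp Hmono Hex Hpres.
split.
- move=> a b hab; rewrite /Ile !compIE.
  have := gmono HA HB hab; lra.
- move=> u a hu; apply: ival_inj; rewrite !compIE (gequiv _ HA HB hu); lra.
- move=> S m hpsi hglb; apply: ival_inj; rewrite !compIE.
  have hDm0 := ival_ge0 (rho_set act B m); have hDm1 := ival_le1 (rho_set act B m).
  apply/eqP; rewrite eq_le; apply/andP; split.
    apply: infI_ge; last by lra.
    move=> s [x hx <-]; rewrite !compIE.
    have := gmono HA HB (hglb.1 x hx); lra.
  set c := ival (infI _).
  case: (leP c 0) => hc; first by lra.
  have hc1 : c <= 1 by exact: infI_le1.
  have hall : act (wc c) @` S `<=` B.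
    move=> y [x hx <-]; apply: (Ldir2 HA Hup Hinv Hcl hc hc1).
    have := @infI_le [set compI (rho_set act B a) | a in S] (compI (rho_set act B x)) (ex_intro2 _ _ x hx erefl).
    rewrite -/c !compIE; lra.
  have hm := Hflt _ _ hall (psiop_img HJ HA (wc_U hc hc1) hpsi)
    (Hpres _ _ _ (wc_U hc hc1) hpsi hglb).
  have := Ldir1 HA hc hc1 hm; lra.
Qed.

Lemma part4 (Psi : doctrine) (A : poset) (act : (I -> I) -> A -> A) (B : set A) :
  U_inflattice Psi act -> UFilt Psi act B ->
  (fun a => compI (rho_set act B a)) @^-1` [set I1] = B.
Proof.
move=> HA [Hinv Hcl [Hup Hflt]].
have HA' := HA; case: HA' => Hid Hcomp Hmono Hex Hpres.
apply/seteqP; split => a; rewrite /preimage /=.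
  move=> h; apply: Hcl; apply: ival_inj.
  have := congr1 ival h; rewrite !compIE [ival I1]/= [ival I0]/=; lra.
move=> ha; apply: ival_inj; rewrite !compIE [ival I1]/=.
have hle : le_r act I0 a a.
  have := KG a HA Uid Uid (r := I0) (fun t => ltac:(rewrite /= addr0; exact: lexx)).
  by rewrite Hid.
have := le_trans (rho_set_le act a ha) (rho_le hle).
have := ival_ge0 (rho_set act B a); rewrite [ival I0]/=; lra.
Qed.

Lemma part5 (Psi : doctrine) (A : poset) (act : (I -> I) -> A -> A) f g :
  U_inflattice Psi act -> UInf_map Psi act f -> UInf_map Psi act g ->
  ((forall a, Ile (f a) (g a)) <->
   (f @^-1` [set I1] `<=` g @^-1` [set I1])).
Proof.
move=> HA Hf Hg; split.
  move=> h a; rewrite /preimage /= => hfa; apply: ival_inj.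
  have := h a; rewrite /Ile hfa [ival I1]/= => h1.
  by apply/eqP; rewrite eq_le ival_le1 h1.
move=> hsub a.
have ef := congr1 (fun k => k a) (part3 HA Hf).
have eg := congr1 (fun k => k a) (part3 HA Hg).
rewrite /Ile -ef -eg !compIE.
suff : ival (rho_set act (g @^-1` [set I1]) a) <= ival (rho_set act (f @^-1` [set I1]) a) by lra.
apply: infI_ge; last exact: infI_le1.
move=> s [b hb <-]; apply: rho_set_le; exact: hsub.
Qed.

Unset Implicit Arguments.
Local Close Scope ring_scope.

Theorem proposition4p9 (Phi Psi : doctrine) (A : poset)
    (act : (I -> I) -> A -> A) :
  join_doctrine Phi -> join_doctrine Psi -> Phi omega_poset ->
  sound_dual Phi Psi -> U_inflattice Psi act ->
  [/\ (* f |-> f^-1(1) lands in the invariant closed filters *)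
      (forall f, UInf_map Psi act f -> UFilt Psi act (f @^-1` [set I1])),
      (* phi |-> 1 - rho(phi, -) lands in UInf(A, I) *)
      (forall B, UFilt Psi act B -> UInf_map Psi act (fun a => compI (rho_set act B a))),
      (* the two maps are mutually inverse *)
      (forall f, UInf_map Psi act f ->
          (fun a => compI (rho_set act (f @^-1` [set I1]) a)) = f),
      (forall B, UFilt Psi act B ->
          (fun a => compI (rho_set act B a)) @^-1` [set I1] = B) &
      (* and order-preserving and reflecting *)
      (forall f g, UInf_map Psi act f -> UInf_map Psi act g ->
          ((forall a, Ile (f a) (g a)) <->
           (f @^-1` [set I1] `<=` g @^-1` [set I1])))].
Proof.
move=> _ HJ _ _ HA; split.
- by move=> f Hf; exact: (part1 HA Hf).
- by move=> B HB; exact: (part2 HJ HA HB).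
- by move=> f Hf; exact: (part3 HA Hf).
- by move=> B HB; exact: (part4 HA HB).
- by move=> f g Hf Hg; exact: (part5 HA Hf Hg).
Qed.
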